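(* Let $S$ be a finite set, let $\sigma,\pi\in\mathrm{Perm}(S)$, and let $\tau\in\mathrm{Cyc}(\pi)$ be a transposition. Let $S'=S\setminus\mathrm{supp}(\tau)$ and $\pi'=\pi|_{S'}$. Then $g(\sigma,\pi)-g(\sigma\setminus\tau,\pi')=1$ if $\tau$ is a $\sigma$-bridge, and $g(\sigma,\pi)-g(\sigma\setminus\tau,\pi')=0$ otherwise.
   Context: $\mathrm{Perm}(S)$ denotes permutations of $S$, $\mathrm{supp}(\sigma)=\{k:\sigma(k)\ne k\}$, and $\mathrm{Cyc}(\sigma)$ is the set of cycles of $\sigma$ including fixed points as trivial cycles ($\#\mathrm{Cyc}$ counts them all). $\pi|_{S'}$ is the restriction of $\pi$ to the union $S'$ of its cycles. A $\sigma$-bridge is a transposition swapping two elements in different cycles of $\sigma$ (fixed points count as cycles). $\sigma\setminus\tau\in\mathrm{Perm}(S\setminus\mathrm{supp}(\tau))$ is $(\sigma\setminus\tau)(k)=(\tau\sigma)^{r(k)}(k)$ with $r(k)\ge1$ minimal such that $(\tau\sigma)^{r(k)}(k)\notin\mathrm{supp}(\tau)$. $\pi\bowtie\sigma\in\mathrm{Perm}(\{0,1\}\times S)$ is $(0,k)\mapsto(1,\sigma(k))$, $(1,k)\mapsto(0,\pi(k))$. The genus is defined by $2g(\sigma,\pi)=\#S+\#\mathrm{Cyc}(\sigma)-\#\mathrm{Cyc}(\pi)-\#\mathrm{Cyc}(\pi\bowtie\sigma)$. *)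

(* Defs.v *)
From mathcomp Require Import all_boot all_order all_fingroup all_algebra.
Set Implicit Arguments. Unset Strict Implicit. Unset Printing Implicit Defensive.
Import GRing.Theory Num.Theory.

Definition cyc_of (U : finType) (f : U -> U) (A : {set U}) (x : U) : {set U} :=
  [set y in A | fconnect f x y].

(* #Cyc(f) for a permutation f of A (fixed points counted as trivial cycles) *)
Definition ncyc (U : finType) (f : U -> U) (A : {set U}) : nat :=
  #|[set cyc_of f A x | x in A]|.

Section Genus.
Variable T : finType.

Definition supp (s : {perm T}) : {set T} := [set x | s x != x].

Definition restr (f : T -> T) (A : {set T}) (x : T) : T :=
  if x \in A then f x else x.

(* sigma \ tau : k |-> (tau sigma)^{r(k)} k, r(k) >= 1 minimal with the result
   outside supp(tau).  Here (sigma * tau)%g x = tau (sigma x) is the function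
   "tau sigma".  A return time r(k) <= #|T| always exists.  Points of supp(tau)
   are sent to themselves (they are outside the domain). *)
Definition minus (sigma tau : {perm T}) (k : T) : T :=
  let f := (sigma * tau)%g in
  if k \in supp tau then k else
  let r := head 0%N [seq r <- iota 1 #|T| | (f ^+ r)%g k \notin supp tau] in
  (f ^+ r)%g k.

(* pi ⋈ sigma on {0,1} x S, with 0 = false, 1 = true:
   (0,k) |-> (1, sigma k), (1,k) |-> (0, pi k) *)
Definition bowtie (pi sigma : T -> T) (x : bool * T) : bool * T :=
  if x.1 then (false, pi x.2) else (true, sigma x.2).

Local Open Scope ring_scope.
Definition genus (S : {set T}) (sigma pi : T -> T) : rat :=
  ((#|S| + ncyc sigma S)%:R - (ncyc pi S)%:R
     - (ncyc (bowtie pi sigma) (setX [set: bool] S))%:R) / 2%:R.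

End Genus.

(* Main.v *)
Require Import Defs.
From mathcomp Require Import all_boot all_order all_fingroup all_algebra.
From mathcomp Require Import zify lra.
Import GRing.Theory Num.Theory.
Set Implicit Arguments. Unset Strict Implicit. Unset Printing Implicit Defensive.

Lemma card_imset_ker_le (U V W : finType) (h : U -> V) (h' : U -> W) (B : {set U}) :
  {in B &, forall x y, (h x == h y) = (h' x == h' y)} -> #|h' @: B| <= #|h @: B|.
Proof.
move=> K.
pose Psi v := omap h' [pick x in B | h x == v].
have E : Some @: (h' @: B) \subset Psi @: (h @: B).
  apply/subsetP=> z /imsetP [w /imsetP [x xB ->] ->].
  apply/imsetP; exists (h x); first by apply: imset_f.
  rewrite /Psi; case: pickP => [y /andP [yB /eqP hyx]|].
    by rewrite /= ; congr Some; apply/eqP; rewrite -K // hyx.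
  by move/(_ x); rewrite xB eqxx.
rewrite -(card_imset _ (@Some_inj _)).
apply: leq_trans (subset_leq_card E) _.
exact: leq_imset_card.
Qed.

Lemma card_imset_ker (U V W : finType) (h : U -> V) (h' : U -> W) (B : {set U}) :
  {in B &, forall x y, (h x == h y) = (h' x == h' y)} -> #|h @: B| = #|h' @: B|.
Proof.
move=> K; apply/eqP; rewrite eqn_leq !card_imset_ker_le //.
by move=> x y xB yB; rewrite K.
Qed.

Lemma cyc_eq (U : finType) (f : U -> U) (B : {set U}) x y :
  injective f -> x \in B -> y \in B ->
  (cyc_of f B x == cyc_of f B y) = fconnect f x y.
Proof.
move=> injf xB yB; apply/eqP/idP => [E|C].
  have : y \in cyc_of f B y by rewrite inE yB connect0.
  by rewrite -E inE => /andP [].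
apply/setP => z; rewrite !inE; case: (z \in B) => //=.
apply/idP/idP => H.
  by apply: connect_trans H; rewrite fconnect_sym.
exact: connect_trans C H.
Qed.

Lemma ncyc_transfer (U V : finType) (f : U -> U) (g : V -> V)
  (B : {set U}) (A : {set V}) (e : U -> V) :
  injective f -> injective g -> e @: B = A ->
  {in B &, forall x y, fconnect f x y = fconnect g (e x) (e y)} ->
  ncyc f B = ncyc g A.
Proof.
move=> injf injg eBA K; rewrite /ncyc -eBA -imset_comp.
apply: card_imset_ker => x y xB yB /=.
have exA : e x \in e @: B by apply: imset_f.
have eyA : e y \in e @: B by apply: imset_f.
by rewrite !cyc_eq // K.
Qed.

Lemma ncyc_eq (U : finType) (f g : U -> U) (A : {set U}) :
  f =1 g -> ncyc f A = ncyc g A.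
Proof.
move=> E; have E' : cyc_of f A =1 cyc_of g A.
  by move=> x; apply/setP => y; rewrite !inE (eq_fconnect E).
by rewrite /ncyc (eq_imset _ E').
Qed.

Lemma fconnect_closed (U : finType) (f : U -> U) (A : {set U}) x y :
  (forall z, (f z \in A) = (z \in A)) -> fconnect f x y -> (x \in A) = (y \in A).
Proof.
move=> cl /iter_findex <-; elim: (findex f x y) => //= n ->.
by rewrite cl.
Qed.

Lemma ncyc_split (U : finType) (f : U -> U) (A : {set U}) :
  injective f -> (forall z, (f z \in A) = (z \in A)) ->
  ncyc f [set: U] = ncyc f A + ncyc f (~: A).
Proof.
move=> injf cl.
have K : forall B : {set U}, {in B &, forall x y,
   (cyc_of f [set: U] x == cyc_of f [set: U] y) = (cyc_of f B x == cyc_of f B y)}.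
  by move=> B x y xB yB; rewrite !cyc_eq ?inE.
rewrite /ncyc -(card_imset_ker (K A)) -(card_imset_ker (K (~: A))).
have -> : cyc_of f [set: U] @: [set: U] =
  cyc_of f [set: U] @: A :|: cyc_of f [set: U] @: ~: A by rewrite -imsetU setUCr.
rewrite cardsU.
suff -> : (cyc_of f [set: U] @: A) :&: (cyc_of f [set: U] @: ~: A) = set0.
  by rewrite cards0 subn0.
apply/setP => Z; rewrite !inE; apply/negP => /andP [/imsetP [x xA ->]].
case/imsetP => y; rewrite inE => yA /eqP; rewrite cyc_eq ?inE // => C.
by move: yA; rewrite -(fconnect_closed cl C) xA.
Qed.

Lemma ncyc_fix (U : finType) (f : U -> U) (A : {set U}) :
  {in A, forall x, f x = x} -> ncyc f A = #|A|.
Proof.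
move=> fx; rewrite /ncyc -[in RHS](imset_id A).
apply: card_imset_ker => x y xA yA.
have E : forall n, iter n f x = x.
  by elim=> //= n ->; rewrite fx.
apply/eqP/eqP => [Hxy|->//].
have : y \in cyc_of f A y by rewrite inE yA connect0.
rewrite -Hxy inE => /andP [_ /iter_findex]; by rewrite E.
Qed.

Lemma porbit_fconnect (T : finType) (s : {perm T}) x y :
  (y \in porbit s x) = fconnect s x y.
Proof.
apply/porbitP/idP => [[i ->]|H]; first by rewrite permX fconnect_iter.
by exists (findex s x y); rewrite permX iter_findex.
Qed.

Definition NC (T : finType) (s : {perm T}) := ncyc s [set: T].

Lemma NC_porbits (T : finType) (s : {perm T}) : NC s = #|porbits s|.
Proof.
rewrite /NC /ncyc /porbits.
have -> : porbit s @: T = porbit s @: [set: T].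
  by apply/setP => X; apply/imsetP/imsetP => [] [x _ ->]; exists x; rewrite ?inE.
apply: card_imset_ker => x y _ _.
rewrite cyc_eq ?inE //; last exact: perm_inj.
by rewrite eq_porbit_mem porbit_fconnect fconnect_sym //; exact: perm_inj.
Qed.

Lemma NC_tperm (T : finType) (s : {perm T}) x y :
  NC (s * tperm x y) + (~~ fconnect s x y).*2 = NC s + (x != y).
Proof.
rewrite !NC_porbits.
have -> : porbits (s * tperm x y) = porbits (tperm x y * s^-1).
  by rewrite -porbitsV invMg tpermV.
rewrite -(porbitsV s) -(porbits_mul_tperm (s^-1) x y) porbitV porbit_fconnect.
by rewrite fconnect_sym //; exact: perm_inj.
Qed.

Lemma NC_split (T : finType) (s : {perm T}) (A : {set T}) :
  perm_on A s -> NC s = ncyc s A + #|~: A|.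
Proof.
move=> pA; rewrite /NC (ncyc_split (A := A)) //; first last.
- by move=> z; rewrite perm_closed.
- exact: perm_inj.
congr (_ + _); apply: ncyc_fix => x; rewrite inE => xA.
exact: out_perm pA xA.
Qed.


Lemma ncyc_bowtie (T : finType) (p s : {perm T}) (A : {set T}) :
  perm_on A p ->
  ncyc (bowtie p s) (setX [set: bool] A) = ncyc (s * p)%g A.
Proof.
move=> pA.
set bw := bowtie p s.
have injb : injective bw.
  by move=> [[] x] [[] y]; rewrite /bw /bowtie /= => -[] // /perm_inj ->.
pose e (u : bool * T) := if u.1 then p u.2 else u.2.
apply: (ncyc_transfer (e := e) injb (@perm_inj _ _)).
  apply/setP => z; apply/imsetP/idP => [[[[] x]]|zA].
    by rewrite !inE /= /e /= => xA ->; rewrite perm_closed.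
    by rewrite !inE /= /e /= => xA ->.
  by exists (false, z); rewrite ?inE.
have iterE : forall n x, iter n.*2 bw (false, x) = (false, iter n (s * p)%g x).
  elim=> // n IH x; rewrite doubleS /= IH /bw /bowtie /= permM //.
have key : forall x y, fconnect bw (false, x) (false, y) = fconnect (s * p)%g x y.
  move=> x y; apply/idP/idP => [H|H].
    move: (iter_findex H); set m := findex _ _ _.
    rewrite -(odd_double_half m); case: (odd m) => /=.
      by rewrite add0n iterE /bw /bowtie.
    by rewrite add0n iterE => -[<-]; apply: fconnect_iter.
  by rewrite -(iter_findex H) -iterE; apply: fconnect_iter.
have nrm : forall u, fconnect bw u (false, e u).
  move=> [[] x]; rewrite /e /=; last exact: connect0.
  by have := fconnect1 bw (true, x).
have sym : connect_sym (frel bw) by move=> x y; apply: fconnect_sym.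
move=> u v _ _.
rewrite (same_connect sym (nrm u)) (same_connect_r sym (nrm v)).
exact: key.
Qed.


Lemma head_filter_iota (P : pred nat) n r :
  0 < r <= n -> P r -> (forall j, 0 < j < r -> ~~ P j) ->
  head 0 [seq j <- iota 1 n | P j] = r.
Proof.
case/andP=> r0 rn Pr nP.
have -> : n = r.-1 + (n - r).+1 by lia.
rewrite iotaD filter_cat.
have -> : [seq j <- iota 1 r.-1 | P j] = [::].
  rewrite (@eq_in_filter _ _ pred0) ?filter_pred0 // => j.
  rewrite mem_iota => /andP [j1 jr]; apply/negbTE/nP.
  by rewrite j1 /=; move: jr; rewrite add1n prednK.
by rewrite add1n prednK //= Pr.
Qed.

Lemma supp_tperm (T : finType) (a b : T) : a != b -> supp (tperm a b) = [set a; b].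
Proof.
move=> ab; apply/setP => x; rewrite !inE.
case: tpermP => [->|->|/eqP xa /eqP xb]; rewrite ?eqxx ?orbT ?(eq_sym b a) ?ab //.
by rewrite (negbTE xa) (negbTE xb).
Qed.

Section MinusEq.
Variables (T : finType) (sigma : {perm T}) (a b : T).
Hypothesis ab : a != b.
Let tau := tperm a b.
Let f := (sigma * tau)%g.
Let h1 := (f * tperm a (f a))%g.
Let h2 := (h1 * tperm b (h1 b))%g.

Lemma h2_val k : k != a -> k != b ->
  h2 k = if f k \in [set a; b] then
            (if f (f k) \in [set a; b] then f (f (f k)) else f (f k))
         else f k.
Proof.
move=> ka kb.
have finj := @perm_inj _ f.
have h1k : h1 k = if f k == a then f a else f k.
  rewrite /h1 permM; case: tpermP => [->|/finj/eqP|/eqP/negbTE ->]; rewrite ?eqxx //.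
  by rewrite (negbTE ka).
have h1b : h1 b = if f b == a then f a else f b.
  rewrite /h1 permM; case: tpermP => [->|/finj/eqP|/eqP/negbTE ->]; rewrite ?eqxx //.
  by rewrite eq_sym (negbTE ab).
have h2k : h2 k = if h1 k == b then h1 b else h1 k.
  rewrite /h2 permM; case: tpermP => [->|/perm_inj/eqP|/eqP/negbTE ->]; rewrite ?eqxx //.
  by rewrite (negbTE kb).
rewrite h2k h1k h1b !inE.
case: (f k =P a) => [fka|/eqP fka].
  have fba : (f b == a) = false by rewrite -fka (inj_eq finj) eq_sym (negbTE kb).
  have faa : (f a == a) = false by rewrite -{2}fka (inj_eq finj) eq_sym (negbTE ka).
  by rewrite fba fka faa /=; case: (f a =P b) => [->|].
rewrite /=.
case: (f k =P b) => [fkb|/eqP fkb] /=; last by [].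
have fbb : (f b == b) = false by rewrite -{2}fkb (inj_eq finj) eq_sym (negbTE kb).
by rewrite fkb fbb orbF; case: (f b =P a) => [->|].
Qed.

Lemma minus_val k : k != a -> k != b ->
  minus sigma tau k = if f k \in [set a; b] then
            (if f (f k) \in [set a; b] then f (f (f k)) else f (f k))
         else f k.
Proof.
move=> ka kb.
have finj := @perm_inj _ f.
rewrite /minus supp_tperm // !inE (negbTE ka) (negbTE kb) /= -/f.
have n3 : 3 <= #|T|.
  have U : uniq [:: k; a; b] by rewrite /= !inE negb_or ka kb ab.
  move/card_uniqP: U => E; rewrite -[3]/(size [:: k; a; b]) -E; apply: max_card.
set P := fun j => (f ^+ j)%g k \notin [set a; b].
have P1 : P 1 = (f k \notin [set a; b]) by rewrite /P permX.
have P2 : P 2 = (f (f k) \notin [set a; b]) by rewrite /P permX.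
have P3 : P 3 = (f (f (f k)) \notin [set a; b]) by rewrite /P permX.
case: ifP => H1.
  case: ifP => H2.
    rewrite (@head_filter_iota P _ 3) ?permX //.
    - have d12 : f k != f (f k).
        rewrite (inj_eq finj); apply/eqP => E; move: H1; rewrite -E.
        by rewrite (negbTE ka) (negbTE kb).
      have d23 : f (f k) != f (f (f k)) by rewrite (inj_eq finj).
      have d13 : f k != f (f (f k)).
        rewrite (inj_eq finj); apply/eqP => E; move: H2; rewrite -E.
        by rewrite (negbTE ka) (negbTE kb).
      rewrite P3 !inE; apply/negP => H3.
      case/orP: H1 => /eqP E1; case/orP: H2 => /eqP E2; case/orP: H3 => /eqP E3;
        by move: d12 d23 d13; rewrite E3 E2 E1 ?eqxx //=.
    - move=> j /andP [j0 j3]; have : (j == 1) || (j == 2) by lia.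
      by case/orP => /eqP ->; rewrite ?P1 ?P2 !inE ?H1 ?H2.
  rewrite (@head_filter_iota P _ 2) ?permX //.
  - exact: ltnW n3.
  - by rewrite P2 !inE H2.
  - move=> j /andP [j0 j3]; have -> : j = 1 by lia.
    by rewrite P1 !inE H1.
rewrite (@head_filter_iota P _ 1) ?permX //.
- exact: leq_trans (ltnW (ltnW n3)).
- by rewrite P1 !inE H1.
- by move=> j; lia.
Qed.
End MinusEq.


Lemma perm_on_tperm (T : finType) (A : {set T}) x y :
  x \in A -> y \in A -> perm_on A (tperm x y).
Proof.
move=> xA yA; apply/subsetP => z; rewrite inE.
by case: tpermP => [->|->|]; rewrite ?eqxx.
Qed.

Lemma perm_on_shrink (T : finType) (A : {set T}) (p : {perm T}) a b :
  perm_on A p -> p a = a -> p b = b -> perm_on (A :\: [set a; b]) p.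
Proof.
move=> pA pa pb; apply/subsetP => z; rewrite inE => pz.
rewrite !inE (subsetP pA) ?inE // andbT negb_or.
by apply/andP; split; apply: contra pz => /eqP ->; rewrite ?pa ?pb.
Qed.

Lemma tperm_swap (T : finType) (p : {perm T}) u v :
  p u = u -> (tperm u v * p = p * tperm u (p v))%g.
Proof.
move=> pu; apply/permP => x; rewrite !permM.
case: (tpermP u v x) => [->|->|/eqP xu /eqP xv].
- by rewrite pu tpermL.
- by rewrite tpermR pu.
rewrite tpermD //; last by rewrite (inj_eq perm_inj) eq_sym.
by rewrite -{1}pu (inj_eq perm_inj) eq_sym.
Qed.

Unset Implicit Arguments.
Local Open Scope ring_scope.

Lemma arith (n n' m m' cs cp cb cs' cp' cb' Ns Np Ng Nh2 Npi' Ng2 Nf Nh1 Ng1 : nat)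
  (d e1 e2 : bool) :
  Ns = (cs + m)%N -> Np = (cp + m)%N -> Ng = (cb + m)%N ->
  Nh2 = (cs' + m')%N -> Npi' = (cp' + m')%N -> Ng2 = (cb' + m')%N ->
  (Nf + d.*2 = Ns + true)%N -> (Nh1 + 0.*2 = Nf + e1)%N ->
  (Nh2 + 0.*2 = Nh1 + e2)%N -> (Npi' + 0.*2 = Np + 1)%N ->
  (Ng1 + 0.*2 = Ng + e1)%N -> (Ng2 + 0.*2 = Ng1 + e2)%N ->
  n = (n' + 2)%N -> m' = (m + 2)%N ->
  ((n + cs)%:R - cp%:R - cb%:R) / 2%:R - ((n' + cs')%:R - cp'%:R - cb'%:R) / 2%:R
  = (if d then 1 else 0 : rat).
Proof.
move=> *.
have key : (n + cs + cp' + cb' = n' + cs' + cp + cb + d.*2)%N by lia.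
have := congr1 (fun x : nat => x%:R : rat) key; rewrite !natrD => H.
move: H; clear; case: d => /= H.
  by rewrite -[(1.*2)%N]/2%N in H; lra.
by rewrite -[(0.*2)%N]/0%N in H; lra.
Qed.


Theorem lemma3p17 (T : finType) (S : {set T}) (sigma pi : {perm T})
  (a b : T) :
  perm_on S sigma -> perm_on S pi ->
  a != b -> pi a = b -> pi b = a ->
  let tau := tperm a b in
  let S' := S :\: supp tau in
  genus S sigma pi - genus S' (minus sigma tau) (restr pi S')
  = (if ~~ fconnect sigma a b then 1 else 0).
Proof.
move=> pS pP ab pab pba tau S'.
have aS : a \in S by apply: (subsetP pP); rewrite inE pab eq_sym.
have bS : b \in S by apply: (subsetP pP); rewrite inE pba.
have suppt : supp tau = [set a; b] by apply: supp_tperm.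
have S'E : S' = S :\: [set a; b] by rewrite /S' suppt.
have C1 : #|S| = (#|S'| + 2)%N.
  rewrite S'E -(cardsID [set a; b] S).
  have -> : S :&: [set a; b] = [set a; b].
    by apply/setIidPr/subsetP => x; rewrite !inE => /orP [] /eqP ->.
  by rewrite cards2 ab addnC.
have C2 : #|~: S'| = (#|~: S| + 2)%N.
  clear -C1; have := cardsC S; have := cardsC S'; lia.
pose f := (sigma * tau)%g.
pose h1 := (f * tperm a (f a))%g.
pose h2 := (h1 * tperm b (h1 b))%g.
pose pi' := (pi * tau)%g.
pose g := (sigma * pi)%g.
pose g1 := (g * tperm a (g a))%g.
pose g2 := (g1 * tperm b (g1 b))%g.
have h1a : h1 a = a by rewrite /h1 permM tpermR.
have h2a : h2 a = a.
  rewrite /h2 permM h1a tpermD //; first by rewrite eq_sym.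
  by rewrite -{1}h1a (inj_eq perm_inj) eq_sym.
have h2b : h2 b = b by rewrite /h2 permM tpermR.
have Hmin : minus sigma tau =1 h2.
  move=> k; case: (k =P a) => [->|/eqP ka].
    by rewrite h2a /minus suppt !inE eqxx.
  case: (k =P b) => [->|/eqP kb].
    by rewrite h2b /minus suppt !inE eqxx orbT.
  by rewrite (minus_val _ ab ka kb); symmetry; exact: (h2_val _ ab ka kb).
have pi'a : pi' a = a by rewrite /pi' permM pab tpermR.
have pi'b : pi' b = b by rewrite /pi' permM pba tpermL.
have Hpi' : restr pi S' =1 pi'.
  move=> x; rewrite /restr S'E /pi' permM !inE.
  case: (x =P a) => [->|/eqP xa] /=; first by rewrite pab tpermR.
  case: (x =P b) => [->|/eqP xb] /=; first by rewrite pba tpermL.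
  case xS: (x \in S) => /=.
    rewrite tpermD //.
    - by rewrite -pba (inj_eq perm_inj) eq_sym.
    - by rewrite -pab (inj_eq perm_inj) eq_sym.
  have px : pi x = x by apply: out_perm pP _; rewrite xS.
  rewrite px tpermD //; by rewrite eq_sym.
have Hg : g = (f * pi')%g.
  have comm : forall y, tau (pi (tau y)) = pi y.
    move=> y; rewrite /tau; case: (tpermP a b y) => [->|->|/eqP ya /eqP yb].
    - by rewrite pba tpermL.
    - by rewrite pab tpermR.
    rewrite tpermD //.
    - by rewrite -pba (inj_eq perm_inj) eq_sym.
    - by rewrite -pab (inj_eq perm_inj) eq_sym.
  by apply/permP => x; rewrite /g /f /pi' !permM comm.
have Hg1 : g1 = (h1 * pi')%g.
  by rewrite /g1 Hg permM -mulgA -tperm_swap // mulgA.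
have Hg2 : g2 = (h2 * pi')%g.
  by rewrite /g2 Hg1 permM -mulgA -tperm_swap // mulgA.
have pon_tau : perm_on S tau by apply: perm_on_tperm.
have pon_f : perm_on S f by apply: perm_onM.
have faS : f a \in S by rewrite perm_closed.
have pon_h1 : perm_on S h1 by apply: perm_onM => //; apply: perm_on_tperm.
have h1bS : h1 b \in S by rewrite perm_closed.
have pon_h2 : perm_on S h2 by apply: perm_onM => //; apply: perm_on_tperm.
have pon_h2' : perm_on S' h2 by rewrite S'E; apply: perm_on_shrink.
have pon_pi' : perm_on S' pi'.
  by rewrite S'E; apply: perm_on_shrink => //; apply: perm_onM.
have pon_g : perm_on S g by apply: perm_onM.
have pon_g2' : perm_on S' g2 by rewrite Hg2; apply: perm_onM.
have E1 := NC_split pS.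
have E2 := NC_split pP.
have E3 := NC_split pon_g.
have Eb : ncyc (bowtie pi sigma) (setX [set: bool] S) = ncyc g S by apply: ncyc_bowtie.
have E4 := NC_split pon_h2'.
have Em : ncyc (minus sigma tau) S' = ncyc h2 S' by apply: ncyc_eq.
have E5 := NC_split pon_pi'.
have Ep : ncyc (restr pi S') S' = ncyc pi' S' by apply: ncyc_eq.
have E6 := NC_split pon_g2'.
have Eb' : ncyc (bowtie (restr pi S') (minus sigma tau)) (setX [set: bool] S') = ncyc g2 S'.
  rewrite (@ncyc_eq _ _ (bowtie pi' h2)); last first.
    by move=> [[] x]; rewrite /bowtie /= ?Hmin ?Hpi'.
  by rewrite ncyc_bowtie // Hg2.
have T1 := NC_tperm sigma a b.
have T2 := NC_tperm f a (f a).
have T3 := NC_tperm h1 b (h1 b).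
have T4 := NC_tperm pi a b.
have T5 := NC_tperm g a (g a).
have T6 := NC_tperm g1 b (g1 b).
rewrite !fconnect1 /= in T2 T3 T5 T6.
have fpab : fconnect pi a b by rewrite -pab fconnect1.
rewrite fpab ab /= in T4; rewrite ab in T1.
have Q1 : (a != g a) = (a != f a).
  by rewrite Hg permM -{1}pi'a (inj_eq perm_inj).
have Q2 : (b != g1 b) = (b != h1 b).
  by rewrite Hg1 permM -{1}pi'b (inj_eq perm_inj).
rewrite Q1 in T5; rewrite Q2 in T6.
rewrite /genus Eb Em Ep Eb'.
move: E1 E2 E3 E4 E5 E6 T1 T2 T3 T4 T5 T6 C1 C2.
rewrite /NC.
exact: arith.
Qed.
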